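(* Let $D,D',E,E'$ be abstract storage devices. (i) If $D\le D'$ and $E\le E'$, then $D\times E\le D'\times E'$. (ii) If $D\le D'$, then $D^{(k)}\le D'^{(k)}$ for every integer $k\ge1$.
   Context: An abstract storage device (ASD) is a pair $D=(\mathcal{S}_D,\mathcal{P}_D)$, $\mathcal{S}_D$ a finite set and $\mathcal{P}_D$ a finite family of partitions of $\mathcal{S}_D$. For a partition $\pi$ of $\mathcal{S}'$ and $\phi:\mathcal{S}\to\mathcal{S}'$, $\pi\circ\phi$ is the partition of $\mathcal{S}$ with $x,y$ in the same block iff $\phi(x),\phi(y)$ are in the same block of $\pi$; $\pi\preceq\rho$ means every block of $\pi$ lies in a block of $\rho$; $\wedge$ is the meet of partitions (nonempty pairwise intersections of blocks). $D\le D'$ means there exist $\phi:\mathcal{S}_D\to\mathcal{S}_{D'}$, $\alpha:\mathcal{P}_D\to\mathcal{P}_{D'}$ with $\alpha(\pi)\circ\phi\preceq\pi$ for all $\pi\in\mathcal{P}_D$. The direct product $D\times D'$ has state space $\mathcal{S}_D\times\mathcal{S}_{D'}$ and partition set $\{\pi\times\pi':\pi\in\mathcal{P}_D,\pi'\in\mathcal{P}_{D'}\}$ with $\pi\times\pi'=\{B\times B':B\in\pi,B'\in\pi'\}$. For $k\ge1$, $D^{(k)}$ has state space $\mathcal{S}_D$ and partition set $\{\pi_1\wedge\cdots\wedge\pi_k:\pi_1,\dots,\pi_k\in\mathcal{P}_D\}$. *)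

(* Defs.v *)
From HB Require Import structures.
From mathcomp Require Import all_boot.
Set Implicit Arguments. Unset Strict Implicit. Unset Printing Implicit Defensive.

(* A partition of a finite type T is a set of blocks {set {set T}}. *)

(* Abstract storage device: a finite state space and a finite family of
   (candidate) partitions of it.  Validity (each member is a partition of the
   whole state space) is the predicate [valid_ASD]. *)
Record ASD := MkASD { st : finType; parts : {set {set {set st}}} }.

Definition valid_ASD (D : ASD) : Prop :=
  forall pi, pi \in parts D -> partition pi [set: st D].

(* pi \o phi : x ~ y iff phi x, phi y lie in the same block of pi;
   its blocks are the nonempty preimages of blocks of pi. *)
Definition pcomp (T T' : finType) (pi : {set {set T'}}) (phi : T -> T')
  : {set {set T}} :=
  [set phi @^-1: B | B : {set T'} in pi & phi @^-1: B != set0].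

Definition prefines (T : finType) (pi rho : {set {set T}}) : bool :=
  [forall B in pi, exists C in rho, B \subset C].

Definition asd_le (D D' : ASD) : Prop :=
  exists (phi : st D -> st D') (alpha : {set {set st D}} -> {set {set st D'}}),
    forall pi, pi \in parts D ->
      alpha pi \in parts D' /\ prefines (pcomp (alpha pi) phi) pi.

Definition pprod (T T' : finType) (pi : {set {set T}}) (pi' : {set {set T'}})
  : {set {set (T * T')}} :=
  [set setX B B' | B in pi, B' in pi'].

Definition asd_prod (D E : ASD) : ASD :=
  @MkASD (st D * st E)%type [set pprod pi pi' | pi in parts D, pi' in parts E].

Definition pmeet (T : finType) (pi rho : {set {set T}}) : {set {set T}} :=
  [set B :&: C | B in pi, C in rho & B :&: C != set0].

(* the set of all meets pi_1 ∧ ... ∧ pi_k with pi_i in P  (k >= 1),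
   computed as ((pi_1 ∧ pi_2) ∧ ...) ∧ pi_k *)
Definition kmeets (T : finType) (P : {set {set {set T}}}) (k : nat)
  : {set {set {set T}}} :=
  iter k.-1 (fun Q : {set {set {set T}}} => [set pmeet pi rho | pi in Q, rho in P]) P.

Definition asd_pow (D : ASD) (k : nat) : ASD :=
  @MkASD (st D) (kmeets (parts D) k).

(* Main.v *)
Require Import Defs.
From mathcomp Require Import all_boot.
Set Implicit Arguments. Unset Strict Implicit.

Lemma pcomp_le (T T' : finType) (rho : {set {set T'}}) (phi : T -> T') (pi : {set {set T}}) :
 (forall C, C \in rho -> phi @^-1: C != set0 -> exists2 B, B \in pi & phi @^-1: C \subset B) ->
 prefines (Defs.pcomp rho phi) pi.
Proof.
move=> H; apply/forall_inP => X /imsetP[C]; rewrite inE => /andP[Crho Cne] ->.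
have [B HB HC] := H C Crho Cne; apply/exists_inP; exists B => //.
Qed.

Lemma pcompP (T T' : finType) (rho : {set {set T'}}) (phi : T -> T') (pi : {set {set T}}) C :
  prefines (Defs.pcomp rho phi) pi -> C \in rho -> phi @^-1: C != set0 ->
  exists2 B, B \in pi & phi @^-1: C \subset B.
Proof.
move=> /forall_inP H Cr Cne.
have /H /exists_inP[B ? ?] : phi @^-1: C \in Defs.pcomp rho phi; last by exists B.
by apply/imsetP; exists C => //; rewrite inE Cr Cne.
Qed.

Lemma part1 (D D' E E' : ASD) : asd_le D D' -> asd_le E E' ->
      asd_le (asd_prod D E) (asd_prod D' E').
Proof.
move=> [phi1 [a1 H1]] [phi2 [a2 H2]].
pose phi := fun x : st D * st E => (phi1 x.1, phi2 x.2).
pose al := fun pi : {set {set st D * st E}} =>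
  if [pick p : {set {set st D}} * {set {set st E}} | (p.1 \in parts D) && (p.2 \in parts E) && (pi == pprod p.1 p.2)]
  is Some p then pprod (a1 p.1) (a2 p.2) else set0.
exists phi, al => pi /imset2P[p1 p2 Hp1 Hp2 ->].
rewrite /al; case: pickP => [[q1 q2] /= /andP[/andP[Hq1 Hq2] /eqP Heq] | H]; last first.
  by have := H (p1, p2); rewrite /= Hp1 Hp2 eqxx.
rewrite Heq; have [Hin1 Hr1] := H1 _ Hq1; have [Hin2 Hr2] := H2 _ Hq2.
split; first by apply/imset2P; exists (a1 q1) (a2 q2).
apply: pcomp_le => C /imset2P[C1 C2 HC1 HC2 ->] Cne.
have Eq : phi @^-1: setX C1 C2 = setX (phi1 @^-1: C1) (phi2 @^-1: C2).
  by apply/setP => x; rewrite !inE.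
rewrite Eq in Cne *.
case/set0Pn: Cne => [[a b]]; rewrite !inE /= => /andP[ha hb].
have n1 : phi1 @^-1: C1 != set0 by apply/set0Pn; exists a; rewrite inE.
have n2 : phi2 @^-1: C2 != set0 by apply/set0Pn; exists b; rewrite inE.
have [B1 HB1 S1] := pcompP Hr1 HC1 n1.
have [B2 HB2 S2] := pcompP Hr2 HC2 n2.
exists (setX B1 B2); first by apply/imset2P; exists B1 B2.
exact: setXS.
Qed.

Lemma kmeets_step (T T' : finType) (P : {set {set {set T}}}) (P' : {set {set {set T'}}})
  (phi : T -> T') (alpha : {set {set T}} -> {set {set T'}}) :
  (forall pi, pi \in P -> alpha pi \in P' /\ prefines (Defs.pcomp (alpha pi) phi) pi) ->
  forall n pi, pi \in iter n (fun Q : {set {set {set T}}} => [set pmeet pi rho | pi in Q, rho in P]) P ->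
  exists2 rho, rho \in iter n (fun Q : {set {set {set T'}}} => [set pmeet pi rho | pi in Q, rho in P']) P'
       & prefines (Defs.pcomp rho phi) pi.
Proof.
move=> H; elim=> [|n IH] pi /=.
  by move=> /H [? ?]; exists (alpha pi).
case/imset2P => pi1 pi2 Hpi1 Hpi2 ->.
have [rho1 Hrho1 Hr1] := IH _ Hpi1.
have [Hin2 Hr2] := H _ Hpi2.
exists (pmeet rho1 (alpha pi2)); first by apply/imset2P; exists rho1 (alpha pi2).
apply: pcomp_le => C /imset2P[C1 C2 HC1]; rewrite !inE /= => /andP[HC2 Cn] -> Cne.
have Eq : phi @^-1: (C1 :&: C2) = phi @^-1: C1 :&: phi @^-1: C2.
  by apply/setP => x; rewrite !inE.
rewrite Eq in Cne *.
case/set0Pn: Cne => a; rewrite !inE => /andP[ha hb].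
have n1 : phi @^-1: C1 != set0 by apply/set0Pn; exists a; rewrite inE.
have n2 : phi @^-1: C2 != set0 by apply/set0Pn; exists a; rewrite inE.
have [B1 HB1 S1] := pcompP Hr1 HC1 n1.
have [B2 HB2 S2] := pcompP Hr2 HC2 n2.
exists (B1 :&: B2); last exact: setISS.
apply/imset2P; exists B1 B2 => //; rewrite inE HB2 /=.
apply/set0Pn; exists a; rewrite inE; apply/andP; split.
  by apply: (subsetP S1); rewrite inE.
by apply: (subsetP S2); rewrite inE.
Qed.

Lemma part2 (D D' : ASD) (k : nat) : asd_le D D' -> asd_le (asd_pow D k) (asd_pow D' k).
Proof.
move=> [phi [a H]].
exists phi, (fun pi => odflt set0 [pick rho | (rho \in kmeets (parts D') k) && prefines (Defs.pcomp rho phi) pi]).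
move=> pi Hpi; have [rho Hr1 Hr2] := kmeets_step H Hpi.
case: pickP => [r /andP[] | /(_ rho)]; first by [].
by rewrite Hr1 Hr2.
Qed.

Theorem proposition1 :
  (forall D D' E E' : ASD,
      valid_ASD D -> valid_ASD D' -> valid_ASD E -> valid_ASD E' ->
      asd_le D D' -> asd_le E E' ->
      asd_le (asd_prod D E) (asd_prod D' E')) /\
  (forall (D D' : ASD) (k : nat),
      valid_ASD D -> valid_ASD D' -> 1 <= k ->
      asd_le D D' -> asd_le (asd_pow D k) (asd_pow D' k)).
Proof.
split; first by move=> *; apply: part1.
by move=> *; apply: part2.
Qed.
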